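(* Let $\Gamma$ be a gain operator on $\ell^\infty_+(\mathcal I)$ with $|\mathcal I|<\infty$ whose interconnection graph $\mathcal G$ is strongly connected. The following are equivalent: (a) there exists a path of strict decay for $\Gamma$; (b) there exists $\rho\in\mathcal K_\infty$ such that $\Gamma_\rho$ satisfies the NJI condition.
   Context: Let $\mathcal I$ be a nonempty countable index set; $\ell^\infty_+(\mathcal I)$ is the cone of nonnegative real families $s=(s_i)_{i\in\mathcal I}$ with $\|s\|:=\sup_i|s_i|<\infty$, ordered componentwise; $s>0$ means $s\ge0$, $s\ne0$; $\mathbf 1$ is the all-ones vector. $\mathcal K_\infty$: continuous strictly increasing unbounded $\gamma:\mathbb R_+\to\mathbb R_+$ with $\gamma(0)=0$, acting componentwise. For $\mathcal J\subset\mathcal I$, $s_{|\mathcal J}$ agrees with $s$ on $\mathcal J$ and is $0$ elsewhere. Gain operator: for each $i$ a finite (possibly empty) $\mathcal I_i\subset\mathcal I\setminus\{i\}$; directed graph $\mathcal G$ with vertices $\mathcal I$ and edges $ji$, $j\in\mathcal I_i$; a pointwise equicontinuous family $\gamma_{ij}\in\mathcal K_\infty$ ($ji\in E(\mathcal G)$); functions $\mu_i:\ell^\infty_+(\mathcal I)\to[0,\infty]$ with (M1) some $\xi\in\mathcal K_\infty$ has $\mu_i(0)=0$, $\mu_i(s)\ge\xi(\|s\|)$; (M2) $\mu_i$ monotone; (M3) for each finite $\mathcal J$, $\mu_i$ restricted to vectors vanishing off $\mathcal J$ is finite-valued and continuous; (M4) for each norm-bounded $A$ and $\varepsilon>0$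 there is $\delta>0$ with $\sup_i|\mu_i(s_{|\mathcal I_i})-\mu_i(s^0_{|\mathcal I_i})|\le\varepsilon$ whenever $s^0\in A$, $\|s-s^0\|\le\delta$. $\Gamma_i(s):=\mu_i([\gamma_{ij}(s_j)]_{j\in\mathcal I_i})$ (argument zero outside $\mathcal I_i$). $\Gamma_\rho:=(\mathrm{id}+\rho)\circ\Gamma$. $\mathcal G$ is strongly connected if for all $i,j$ there is a directed path from $i$ to $j$. $T$ satisfies the NJI condition if $T(s)\ge s$ fails for every $s>0$. A path of strict decay for $\Gamma$ is a map $\sigma:\mathbb R_+\to\ell^\infty_+(\mathcal I)$ such that: (i) for some $\rho\in\mathcal K_\infty$, $\Gamma_\rho(\sigma(r))\le\sigma(r)$ for all $r\ge0$; (ii) $\varphi_{\min}(r)\mathbf 1\le\sigma(r)\le\varphi_{\max}(r)\mathbf 1$ for some $\varphi_{\min},\varphi_{\max}\in\mathcal K_\infty$; (iii) each $\sigma_i\in\mathcal K_\infty$; (iv) for each compact $K\subset(0,\infty)$ there are $0<l\le L$ with $l|r_1-r_2|\le|\sigma_i^{-1}(r_1)-\sigma_i^{-1}(r_2)|\le L|r_1-r_2|$ for all $r_1,r_2\in K$, $i\in\mathcal I$. *)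

(* Defs.v *)
From HB Require Import structures.
From mathcomp Require Import all_boot all_order all_algebra.
From mathcomp Require Import all_classical all_reals.
From mathcomp Require Import topology normedtype.
Set Implicit Arguments. Unset Strict Implicit. Unset Printing Implicit Defensive.
Import Order.TTheory GRing.Theory Num.Theory.
Import numFieldNormedType.Exports.
Local Open Scope ring_scope.
Local Open Scope classical_set_scope.

Section Defs.
Variables (R : realType) (I : finType).

(* elements of l^oo_+(I): nonnegative families (bounded automatically, I finite) *)
Definition nonneg (s : I -> R) : Prop := forall i, 0 <= s i.

Definition supnorm (s : I -> R) : R := \big[Num.max/0]_(i : I) `|s i|.

Definition vle (s t : I -> R) : Prop := forall i, s i <= t i.

Definition vpos (s : I -> R) : Prop := nonneg s /\ s <> (fun _ => 0).

Definition restr (J : {set I}) (s : I -> R) : I -> R :=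
  fun j => if j \in J then s j else 0.

(* class K_infty, for functions R_+ -> R_+ (only values on [0,oo) matter) *)
Definition Kinf (g : R -> R) : Prop :=
  [/\ g 0 = 0,
      (forall x y, 0 <= x -> x < y -> g x < g y),
      (forall x, 0 <= x -> forall e, 0 < e -> exists2 d, 0 < d &
          forall y, 0 <= y -> `|x - y| < d -> `|g x - g y| < e) &
      (forall M, exists2 x, 0 <= x & M <= g x)].

(* Gain operator data: Ii i (finite subset of I \ {i}), gains gamma i j,
   and functions mu i : l^oo_+ -> [0,oo]. *)
Definition is_gain_operator (Ii : I -> {set I}) (gamma : I -> I -> R -> R)
    (mu : I -> (I -> R) -> \bar R) : Prop :=
  (forall i, i \notin Ii i) /\
      (forall i j, j \in Ii i -> Kinf (gamma i j)) /\
      (forall r, 0 <= r -> forall e, 0 < e -> exists2 d, 0 < d &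
          forall i j, j \in Ii i -> forall r', 0 <= r' -> `|r - r'| < d ->
            `|gamma i j r - gamma i j r'| < e) /\
      (exists xi, Kinf xi /\ forall i, mu i (fun _ => 0) = 0%E /\
          forall s, nonneg s -> ((xi (supnorm s))%:E <= mu i s)%E) /\
      (forall i s, nonneg s -> (0 <= mu i s)%E) /\
      (forall i s t, nonneg s -> nonneg t -> vle s t -> (mu i s <= mu i t)%E) /\
      (forall i (J : {set I}),
          (forall s, nonneg s -> (forall j, j \notin J -> s j = 0) ->
             mu i s \is a fin_num) /\
          (forall s, nonneg s -> (forall j, j \notin J -> s j = 0) ->
             forall e, 0 < e -> exists2 d, 0 < d &
             forall t, nonneg t -> (forall j, j \notin J -> t j = 0) ->
               supnorm (t - s) < d -> `|fine (mu i t) - fine (mu i s)| < e)) /\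
      (forall A : set (I -> R), (exists B, forall s, A s -> supnorm s <= B) ->
          forall e, 0 < e -> exists2 d, 0 < d &
          forall s0 s, A s0 -> nonneg s0 -> nonneg s -> supnorm (s - s0) <= d ->
            forall i, (`|mu i (restr (Ii i) s) - mu i (restr (Ii i) s0)| <= e%:E)%E).

(* Gamma_i(s) = mu_i([gamma_ij(s_j)]_{j in I_i}); real-valued via fine
   (mu is finite-valued on l^oo_+ by (M3), since I is finite). *)
Definition Gam (Ii : I -> {set I}) (gamma : I -> I -> R -> R)
    (mu : I -> (I -> R) -> \bar R) (s : I -> R) : I -> R :=
  fun i => fine (mu i (fun j => if j \in Ii i then gamma i j (s j) else 0)).

Definition Gam_rho Ii gamma mu (rho : R -> R) (s : I -> R) : I -> R :=
  fun i => Gam Ii gamma mu s i + rho (Gam Ii gamma mu s i).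

Definition NJI (T : (I -> R) -> (I -> R)) : Prop :=
  forall s, vpos s -> ~ vle s (T s).

(* interconnection graph: edge j -> i iff j \in Ii i; strongly connected *)
Definition strongly_connected (Ii : I -> {set I}) : Prop :=
  forall i j : I, connect (fun a b => a \in Ii b) i j.

Definition path_of_strict_decay Ii gamma mu (sigma : R -> I -> R) : Prop :=
  [/\ (exists rho, Kinf rho /\
         forall r, 0 <= r -> vle (Gam_rho Ii gamma mu rho (sigma r)) (sigma r)),
      (exists phimin phimax, [/\ Kinf phimin, Kinf phimax &
         forall r, 0 <= r -> forall i, phimin r <= sigma r i <= phimax r]),
      (forall i, Kinf (fun r => sigma r i)) &
      (forall K : set R, compact K -> K `<=` `]0, +oo[ ->
         exists l L, [/\ 0 < l, l <= L &
           forall i r1 r2 t1 t2, K r1 -> K r2 -> 0 <= t1 -> 0 <= t2 ->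
             sigma t1 i = r1 -> sigma t2 i = r2 ->
             (* t_k = sigma_i^{-1}(r_k) *)
             l * `|r1 - r2| <= `|t1 - t2| <= L * `|r1 - r2|])].

End Defs.

(* Main.v *)
Require Import Defs.
From mathcomp Require Import all_boot all_order all_algebra.
From mathcomp Require Import all_classical all_reals.
From mathcomp Require Import topology normedtype derive.
From mathcomp.algebra_tactics Require Import ring lra.
Import Order.TTheory GRing.Theory Num.Theory.
Import numFieldNormedType.Exports.
Set Implicit Arguments. Unset Strict Implicit. Unset Printing Implicit Defensive.
Local Open Scope ring_scope.

Section Generic.
Variable R : realType.
Implicit Types (f g : R -> R).

Lemma distP (a b d : R) : (`|a - b| < d) <-> (a - d < b /\ b < a + d).
Proof. by rewrite ltr_distlC; split=> [/andP[]|[-> ->]]. Qed.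

Lemma distP' (a b d : R) : (`|a - b| <= d) <-> (a - d <= b /\ b <= a + d).
Proof. by rewrite ler_distlC; split=> [/andP[]|[-> ->]]. Qed.

Lemma fin_delta (T : finType) (Y : Type) (f : T -> Y -> R) (Q : T -> Y -> Prop) :
  (forall x, exists2 d, 0 < d & forall y, f x y < d -> Q x y) ->
  exists2 d, 0 < d & forall x y, f x y < d -> Q x y.
Proof.
move=> H.
have /choice [df Hdf] : forall x, exists d, 0 < d /\ forall y, f x y < d -> Q x y.
  by move=> x; have [d d0 Hd] := H x; exists d.
exists (\big[Num.min/1]_x df x).
  by elim/big_ind: _ => // [x y Hx Hy|x _]; [rewrite lt_min Hx Hy | exact: (Hdf x).1].
move=> x y Hy; apply: (Hdf x).2; apply: (lt_le_trans Hy); exact: bigmin_le.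
Qed.

Lemma fin_large (T : finType) (Q : T -> R -> Prop) :
  (forall x, exists r, forall r', r <= r' -> Q x r') ->
  exists r, forall x r', r <= r' -> Q x r'.
Proof.
move=> H.
have /choice [rf Hrf] := H.
exists (\big[Num.max/0]_x rf x) => x r' Hr; apply: Hrf.
apply: le_trans Hr; exact: le_bigmax.
Qed.

Lemma fin_nat (T : finType) (Q : T -> nat -> Prop) :
  (forall x, exists k, forall k', (k <= k')%N -> Q x k') ->
  exists k, forall x k', (k <= k')%N -> Q x k'.
Proof.
move=> H.
have /choice [kf Hkf] := H.
exists (\max_x kf x) => x k' Hk; apply: Hkf.
apply: leq_trans Hk; exact: leq_bigmax.
Qed.

Lemma fin_minpos (T : finType) (F : T -> R) :
  (forall x, 0 < F x) -> exists2 c, 0 < c & forall x, c <= F x.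
Proof.
move=> H; exists (\big[Num.min/1]_x F x).
  elim/big_ind: _ => //; try (move=> a b Ha Hb; by rewrite lt_min Ha Hb).
  all: try (move=> a _; exact: H).
move=> x; exact: bigmin_le.
Qed.

Lemma Kinf_ge0 g x : Kinf g -> 0 <= x -> 0 <= g x.
Proof.
case=> g0 gi _ _ x0; rewrite le_eqVlt in x0; case/orP: x0 => [/eqP<-|x0].
  by rewrite g0.
by rewrite -g0; apply/ltW/gi.
Qed.

Lemma Kinf_le g x y : Kinf g -> 0 <= x -> x <= y -> g x <= g y.
Proof.
case=> g0 gi _ _ x0; rewrite le_eqVlt; case/orP => [/eqP->//|xy].
exact/ltW/gi.
Qed.

Lemma Kinf_lt g x y : Kinf g -> 0 <= x -> x < y -> g x < g y.
Proof. by case=> g0 gi _ _ x0; apply: gi. Qed.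

Lemma Kinf_gt0 g x : Kinf g -> 0 < x -> 0 < g x.
Proof. move=> Kg x0; have := Kinf_lt Kg (lexx 0) x0; by case: Kg => -> . Qed.

Lemma Kinf_ltinv g x y : Kinf g -> 0 <= x -> 0 <= y -> g x < g y -> x < y.
Proof.
move=> Kg x0 y0 H; rewrite ltNge; apply/negP => yx.
by have := Kinf_le Kg y0 yx; rewrite leNgt H.
Qed.

Lemma Kinf_leinv g x y : Kinf g -> 0 <= x -> 0 <= y -> g x <= g y -> x <= y.
Proof.
move=> Kg x0 y0 H; rewrite leNgt; apply/negP => yx.
by have := Kinf_lt Kg y0 yx; rewrite ltNge H.
Qed.

Lemma Kinf_cont g x e : Kinf g -> 0 <= x -> 0 < e -> exists2 d, 0 < d &
  forall y, 0 <= y -> `|x - y| < d -> `|g x - g y| < e.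
Proof. by case=> _ _ gc _ x0 e0; apply: gc. Qed.

Lemma Kinf_unb g M : Kinf g -> exists2 x, 0 <= x & M <= g x.
Proof. by case=> _ _ _ gu; apply: gu. Qed.

Lemma Kinf_id : Kinf (fun x : R => x).
Proof.
split=> // [x x0 e e0|M].
  by exists e => // y _ H.
by exists `|M|; [exact: normr_ge0 | exact: ler_norm].
Qed.

Lemma Kinf_comp f g : Kinf f -> Kinf g -> Kinf (fun x => f (g x)).
Proof.
move=> Kf Kg; split.
- by case: Kg => -> _ _ _; case: Kf.
- move=> x y x0 xy; apply: (Kinf_lt Kf); [exact: Kinf_ge0|exact: Kinf_lt].
- move=> x x0 e e0.
  have [d1 d10 H1] := Kinf_cont Kf (Kinf_ge0 Kg x0) e0.
  have [d d0 H] := Kinf_cont Kg x0 d10.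
  exists d => // y y0 Hy; apply: H1; [exact: Kinf_ge0|exact: H].
- move=> M; have [y y0 Hy] := Kinf_unb M Kf.
  have [x x0 Hx] := Kinf_unb y Kg.
  exists x => //; apply: le_trans Hy _; exact: Kinf_le.
Qed.

Lemma Kinf_half g : Kinf g -> Kinf (fun x => g x / 2).
Proof.
move=> Kg; split.
- by case: Kg => -> _ _ _; rewrite mul0r.
- move=> x y x0 xy; have := Kinf_lt Kg x0 xy; lra.
- move=> x x0 e e0.
  have e20 : 0 < e * 2 by lra.
  have [d d0 H] := Kinf_cont Kg x0 e20.
  exists d => // y y0 Hy; have h := H y y0 Hy.
  rewrite -mulrBl normrM [X in _ * X]ger0_norm; last by rewrite invr_ge0.
  lra.
- move=> M; have [x x0 Hx] := Kinf_unb (M * 2) Kg; exists x => //; lra.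
Qed.

End Generic.

Section InfSup.
Variable R : realType.
Implicit Types (E : set R).

Lemma inf_lbE E x m : (forall y, E y -> m <= y) -> E x -> inf E <= x.
Proof. by move=> Hm Ex; apply: ge_inf => //; exists m. Qed.

Lemma le_infE E x m : E x -> (forall y, E y -> m <= y) -> m <= inf E.
Proof. by move=> Ex Hm; apply: lb_le_inf => //; exists x. Qed.

Lemma inf_adhE E x m e : E x -> (forall y, E y -> m <= y) -> 0 < e ->
  exists y, E y /\ y < inf E + e.
Proof.
move=> Ex Hm e0; have [y Ey Hy] := inf_adherent e0 (conj (ex_intro _ x Ex) (ex_intro _ m Hm)).
by exists y.
Qed.

Lemma sup_ubE E x M : (forall y, E y -> y <= M) -> E x -> x <= sup E.
Proof. by move=> HM Ex; apply: ub_le_sup => //; exists M. Qed.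

Lemma ge_supE E x M : E x -> (forall y, E y -> y <= M) -> sup E <= M.
Proof. by move=> Ex HM; apply: ge_sup => //; exists x. Qed.

Lemma sup_adhE E x M e : E x -> (forall y, E y -> y <= M) -> 0 < e ->
  exists y, E y /\ sup E - e < y.
Proof.
move=> Ex HM e0; have [y Ey Hy] := sup_adherent e0 (conj (ex_intro _ x Ex) (ex_intro _ M HM)).
by exists y.
Qed.
End InfSup.

Section Basic.
Variables (R : realType) (I : finType) (Ii : I -> {set I})
  (gamma : I -> I -> R -> R) (mu : I -> (I -> R) -> \bar R).
Hypothesis HG : is_gain_operator Ii gamma mu.
Implicit Types (s t : I -> R).

Local Notation G := (Gam Ii gamma mu).

Definition gvec i s : I -> R := fun j => if j \in Ii i then gamma i j (s j) else 0.
Lemma GamE s i : G s i = fine (mu i (gvec i s)). Proof. by []. Qed.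

Lemma Hirr i : i \notin Ii i. Proof. by case: HG. Qed.
Lemma HgK i j : j \in Ii i -> Kinf (gamma i j). Proof. by case: HG => _ [H _]; apply: H. Qed.
Lemma Hmu_ge0 i s : nonneg s -> (0 <= mu i s)%E.
Proof. by case: HG => _ [_ [_ [_ [H _]]]]; apply: H. Qed.
Lemma Hmu_mono i s t : nonneg s -> nonneg t -> vle s t -> (mu i s <= mu i t)%E.
Proof. by case: HG => _ [_ [_ [_ [_ [H _]]]]]; apply: H. Qed.
Lemma Hmu_fin i s : nonneg s -> mu i s \is a fin_num.
Proof.
case: HG => _ [_ [_ [_ [_ [_ [H _]]]]]] Hs.
by apply: (H i (setTfor I)).1 => // j; rewrite finset.in_setT.
Qed.
Lemma Hmu_cont i s : nonneg s -> forall e, 0 < e -> exists2 d, 0 < d &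
  forall t, nonneg t -> supnorm (t - s) < d -> `|fine (mu i t) - fine (mu i s)| < e.
Proof.
case: HG => _ [_ [_ [_ [_ [_ [H _]]]]]] Hs e e0.
have [d d0 Hd] := (H i (setTfor I)).2 s Hs (fun j Hj => ltac:(by rewrite finset.in_setT in Hj)) e e0.
exists d => // t Ht; apply: Hd => // j; by rewrite finset.in_setT.
Qed.
Lemma HM1 : exists xi, Kinf xi /\ forall i, mu i (fun _ => 0) = 0%E /\
  forall s, nonneg s -> ((xi (supnorm s))%:E <= mu i s)%E.
Proof. by case: HG => _ [_ [_ [H _]]]. Qed.

Lemma supnorm_ge s j : `|s j| <= supnorm s.
Proof. exact: (le_bigmax 0 (fun i => `|s i|) j). Qed.
Lemma supnorm_le s c : 0 <= c -> (forall j, `|s j| <= c) -> supnorm s <= c.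
Proof. by move=> c0 H; apply: bigmax_le. Qed.

Lemma gvec_ge0 i s : nonneg s -> nonneg (gvec i s).
Proof.
move=> Hs j; rewrite /gvec; case: ifP => // Hj.
exact: (Kinf_ge0 (HgK Hj)).
Qed.

Lemma gvec_mono i s t : nonneg s -> vle s t -> vle (gvec i s) (gvec i t).
Proof.
move=> Hs Hst j; rewrite /gvec; case: ifP => // Hj.
exact: (Kinf_le (HgK Hj)).
Qed.

Lemma vle_nonneg s t : nonneg s -> vle s t -> nonneg t.
Proof. by move=> Hs Hst j; apply: le_trans (Hs j) (Hst j). Qed.

Lemma Gam_ge0 s i : nonneg s -> 0 <= G s i.
Proof. by move=> Hs; rewrite GamE; apply: fine_ge0; apply: Hmu_ge0; apply: gvec_ge0. Qed.

Lemma Gam_mono s t : nonneg s -> vle s t -> vle (G s) (G t).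
Proof.
move=> Hs Hst i; rewrite !GamE.
have Ht := vle_nonneg Hs Hst.
apply: fine_le; try apply: Hmu_fin; try apply: gvec_ge0 => //.
apply: Hmu_mono; try apply: gvec_ge0 => //; exact: gvec_mono.
Qed.

Lemma Gam0 i : G (fun _ => 0) i = 0.
Proof.
rewrite GamE; have [xi [_ H]] := HM1.
have -> : gvec i (fun _ => 0) = (fun _ => 0).
  apply: funext => j; rewrite /gvec; case: ifP => // Hj.
  by case: (HgK Hj).
by rewrite (H i).1.
Qed.

Lemma Gam_edge : exists xi, Kinf xi /\
  forall s i j, nonneg s -> j \in Ii i -> xi (gamma i j (s j)) <= G s i.
Proof.
have [xi [Kxi H]] := HM1; exists xi; split => // s i j Hs Hj.
have Hv := gvec_ge0 i Hs.
apply: (le_trans (y := xi (supnorm (gvec i s)))).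
  apply: (Kinf_le Kxi); first exact: (Kinf_ge0 (HgK Hj)).
  apply: le_trans (supnorm_ge _ j); rewrite /gvec Hj; exact: ler_norm.
rewrite GamE -lee_fin fineK; last exact: Hmu_fin.
exact: (H i).2.
Qed.

Lemma Gam_cont s e : nonneg s -> 0 < e -> exists2 d, 0 < d &
  forall t, nonneg t -> (forall j, `|s j - t j| < d) -> forall i, `|G s i - G t i| < e.
Proof.
move=> Hs e0.
have [d1 d10 H1] := @fin_delta R I (I -> R) (fun i w => supnorm (w - gvec i s))
  (fun i w => nonneg w -> `|fine (mu i w) - fine (mu i (gvec i s))| < e)
  (fun i => ltac:(have [d d0 Hd] := Hmu_cont i (gvec_ge0 i Hs) e0;
                  exists d => // w Hw Hw'; exact: Hd)).
have d120 : 0 < d1 / 2 by lra.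
have [d2 d20 H2] := @fin_delta R (I * I)%type R (fun ij r => `|s ij.2 - r|)
  (fun ij r => ij.2 \in Ii ij.1 -> 0 <= r ->
      `|gamma ij.1 ij.2 (s ij.2) - gamma ij.1 ij.2 r| < d1 / 2)
  (fun ij => ltac:(case: ij => i j /=; case Hj: (j \in Ii i);
      [ have [d d0 Hd] := Kinf_cont (HgK Hj) (Hs j) d120;
        by exists d => // r Hr _ r0; apply: Hd
      | by exists 1 ])).
exists d2 => // t Ht Hst i.
rewrite distrC !GamE; apply: (H1 i); last exact: gvec_ge0.
suff hh : supnorm (gvec i t - gvec i s) <= d1 / 2 by lra.
apply: supnorm_le; first lra.
move=> j; have -> : (gvec i t - gvec i s) j = gvec i t j - gvec i s j by [].
rewrite /gvec; case: ifP => Hj; last by rewrite subr0 normr0; lra.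
rewrite distrC; apply/ltW; exact: (H2 (i, j) (t j) (Hst j) Hj (Ht j)).
Qed.

Variable rho : R -> R.
Hypothesis Krho : Kinf rho.
Local Notation T := (Gam_rho Ii gamma mu rho).

Lemma TE s i : T s i = G s i + rho (G s i). Proof. by []. Qed.

Lemma T_ge0 s i : nonneg s -> 0 <= T s i.
Proof.
move=> Hs; rewrite TE; have := Gam_ge0 i Hs => h.
have := Kinf_ge0 Krho h; lra.
Qed.

Lemma T_mono s t : nonneg s -> vle s t -> vle (T s) (T t).
Proof.
move=> Hs Hst i; rewrite !TE; have h := Gam_mono Hs Hst i.
have := Kinf_le Krho (Gam_ge0 i Hs) h; lra.
Qed.

Lemma T0 i : T (fun _ => 0) i = 0.
Proof. by rewrite TE Gam0; case: Krho => ->; rewrite addr0. Qed.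

Lemma T_cont s e : nonneg s -> 0 < e -> exists2 d, 0 < d &
  forall t, nonneg t -> (forall j, `|s j - t j| < d) -> forall i, `|T s i - T t i| < e.
Proof.
move=> Hs e0.
have e20 : 0 < e / 2 by lra.
have [d1 d10 H1] := @fin_delta R I R (fun i r => `|G s i - r|)
  (fun i r => 0 <= r -> `|rho (G s i) - rho r| < e / 2)
  (fun i => ltac:(have [d d0 Hd] := Kinf_cont Krho (Gam_ge0 i Hs) e20;
      by exists d => // r Hr r0; apply: Hd)).
have dm0 : 0 < Num.min d1 (e / 2) by rewrite lt_min d10 e20.
have [d d0 Hd] := Gam_cont Hs dm0.
exists d => // t Ht Hst i.
have := Hd t Ht Hst i; rewrite lt_min => /andP[h1 h2].
have h3 := H1 i (G t i) h1 (Gam_ge0 i Ht).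
rewrite !TE; apply/distP.
move/distP: h2; move/distP: h3; lra.
Qed.
End Basic.

Section AtoB.
Variables (R : realType) (I : finType) (Ii : I -> {set I})
  (gamma : I -> I -> R -> R) (mu : I -> (I -> R) -> \bar R).
Hypothesis HG : is_gain_operator Ii gamma mu.
Local Notation G := (Gam Ii gamma mu).

Lemma a_to_b : (exists sigma, path_of_strict_decay Ii gamma mu sigma) ->
  exists rho, Kinf rho /\ NJI (Gam_rho Ii gamma mu rho).
Proof.
case=> sig [[rho [Krho Hdec]] _ HsK _].
exists (fun x => rho x / 2); split; first exact: Kinf_half.
move=> s [Hs Hs0] Hle.
pose A : set R := fun r => 0 <= r /\ forall i, s i <= sig r i.
have [r0 Hr0] : exists r, forall i r', r <= r' -> s i <= sig r' i.
  apply: fin_large => i.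
  have [x x0 Hx] := Kinf_unb (s i) (HsK i).
  exists x => r' Hr'; apply: le_trans Hx _; exact: (Kinf_le (HsK i)).
have Ar : A (Num.max r0 0).
  split; first by rewrite le_max lexx orbT.
  by move=> i; apply: Hr0; rewrite le_max lexx.
have Alb : forall y, A y -> 0 <= y by move=> y [].
pose rs := inf A.
have rs0 : 0 <= rs by apply: le_infE Ar Alb.
have sig0 : forall i, sig 0 i = 0 by move=> i; case: (HsK i).
have Hge : forall i, s i <= sig rs i.
  move=> i; rewrite leNgt; apply/negP => Hlt.
  have e0 : 0 < s i - sig rs i by lra.
  have [d d0 Hd] := Kinf_cont (HsK i) rs0 e0.
  have [a [Aa Ha]] := inf_adhE Ar Alb d0.
  have ars : rs <= a by apply: inf_lbE Alb Aa.
  have := Hd a (Alb a Aa) (ltac:(apply/distP; split; lra)).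
  move/distP => [h1 h2]; have := Aa.2 i; lra.
case: (pselect (exists i, sig rs i <= s i)) => [[i Hi]|Hn].
- apply: Hs0; apply: funext => j.
  have Hsig := Hdec rs rs0 i; rewrite /Gam_rho in Hsig.
  have Hsl := Hle i; rewrite /Gam_rho in Hsl.
  set g := G (sig rs) i in Hsig.
  have g0 : 0 <= g by apply: (Gam_ge0 HG); move=> k; apply: (Kinf_ge0 (HsK k)).
  have Hm : G s i <= g by apply: (Gam_mono HG Hs Hge).
  have Hrm := Kinf_le Krho (Gam_ge0 HG i Hs) Hm.
  have Hrg : rho g <= 0 by lra.
  have g00 : g = 0.
    apply/eqP; rewrite eq_le g0 andbT; rewrite leNgt; apply/negP => gp.
    have := Kinf_gt0 Krho gp; lra.
  have rs00 : rs = 0.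
    apply/eqP; rewrite eq_le rs0 andbT; rewrite leNgt; apply/negP => rp.
    have := Kinf_gt0 (HsK i) rp; rewrite g00 in Hsig Hrm.
    have : rho 0 = 0 by case: Krho.
    have := Hs i; lra.
  have := Hge j; have := Hs j; rewrite rs00 sig0; lra.
- have Hn' : forall i, s i < sig rs i.
    move=> i; rewrite ltNge; apply/negP => h; apply: Hn; by exists i.
  have [rsp|rsz] := ltP 0 rs; last first.
    have rsz' : rs = 0 by apply/eqP; rewrite eq_le rsz rs0.
    apply: Hs0; apply: funext => j; have := Hn' j; rewrite rsz' sig0.
    have := Hs j; lra.
  have Hloc : forall i, exists2 d, 0 < d & forall r, `|rs - r| < d -> 0 <= r -> s i < sig r i.
    move=> i; have e0 : 0 < sig rs i - s i by have := Hn' i; lra.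
    have [d d0 Hd] := Kinf_cont (HsK i) rs0 e0.
    exists d => // r Hr r0'; have := Hd r r0' Hr; move/distP; lra.
  have [d d0 Hd] := @fin_delta R I R (fun i r => `|rs - r|)
    (fun i r => 0 <= r -> s i < sig r i) Hloc.
  pose r := rs - Num.min d rs / 2.
  have mpos : 0 < Num.min d rs by rewrite lt_min d0 rsp.
  have mle1 : Num.min d rs <= d by rewrite ge_min lexx.
  have mle2 : Num.min d rs <= rs by rewrite ge_min lexx orbT.
  have r0' : 0 <= r by rewrite /r; lra.
  have Arr : A r.
    split => // i; apply/ltW; apply: Hd => //; apply/distP; rewrite /r; split; lra.
  have := inf_lbE Alb Arr; rewrite -/rs /r; lra.
Qed.
End AtoB.

Section Sums.
Variables (R : realType) (I : finType).
Implicit Types (s t : I -> R).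
Definition vsum s := \sum_i s i.

Lemma vsum_ge_term s j : nonneg s -> s j <= vsum s.
Proof.
move=> Hs; rewrite /vsum (bigD1 j) //= lerDl; apply: sumr_ge0 => i _; exact: Hs.
Qed.

Lemma vsum_ge0 s : nonneg s -> 0 <= vsum s.
Proof. by move=> Hs; apply: sumr_ge0 => i _; exact: Hs. Qed.

Lemma vsum_le s t : vle s t -> vsum s <= vsum t.
Proof. by move=> H; apply: ler_sum => i _; exact: H. Qed.

Lemma vsum_diff s t j : vle s t -> t j - s j <= vsum t - vsum s.
Proof.
move=> H; rewrite /vsum -sumrB.
have := @vsum_ge_term (fun i => t i - s i) j; apply => i; have := H i; lra.
Qed.

Lemma vsum_lin s t (th : R) :
  vsum (fun i => s i + th * (t i - s i)) = vsum s + th * (vsum t - vsum s).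
Proof. by rewrite /vsum big_split /= -mulr_sumr sumrB. Qed.

Lemma vsum_big (i0 : I) s c : vsum s >= c -> exists j, c / #|I|%:R <= s j.
Proof.
move=> Hs; apply/not_existsP => /= H.
have n0 : (0 < #|I|)%N by apply/card_gt0P; exists i0.
have nR : 0 < (#|I|%:R : R) by rewrite ltr0n.
have : vsum s < \sum_(i : I) (c / #|I|%:R).
  apply: ltr_sum; first by apply/hasP; exists i0 => //; rewrite mem_index_enum.
  by move=> i _; rewrite ltNge; apply/negP => h; apply: (H i).
rewrite sumr_const -[_ *+ _]mulr_natr divfK ?gt_eqF // => h; lra.
Qed.
End Sums.

Section Hard1.
Local Open Scope classical_set_scope.
Variables (R : realType) (I : finType) (i0 : I) (Ii : I -> {set I})
  (gamma : I -> I -> R -> R) (mu : I -> (I -> R) -> \bar R).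
Hypothesis HG : is_gain_operator Ii gamma mu.
Hypothesis HSC : strongly_connected Ii.
Variable rho : R -> R.
Hypothesis Krho : Kinf rho.
Hypothesis HN : NJI (Gam_rho Ii gamma mu rho).
Variable xi : R -> R.
Hypothesis Kxi : Kinf xi.
Hypothesis Hxi : forall s i j, nonneg s -> j \in Ii i ->
  xi (gamma i j (s j)) <= Gam Ii gamma mu s i.
Implicit Types (s u v w y z : I -> R).

Local Notation G := (Gam Ii gamma mu).
Local Notation T := (Gam_rho Ii gamma mu rho).

Definition Dec x := nonneg x /\ vle (T x) x.

Lemma G_le_T s i : nonneg s -> G s i <= T s i.
Proof.
move=> Hs; rewrite TE lerDl; apply: (Kinf_ge0 Krho); exact: Gam_ge0.
Qed.

Lemma T_edge s i j : nonneg s -> j \in Ii i -> xi (gamma i j (s j)) <= T s i.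
Proof. by move=> Hs Hj; apply: le_trans (Hxi Hs Hj) (G_le_T i Hs). Qed.

Lemma conn_back (P : I -> Prop) j : P j ->
  (forall a b, a \in Ii b -> P b -> P a) -> forall k, P k.
Proof.
move=> Pj Hstep k; move: (HSC k j) => /connectP [p Hp Hl].
elim: p k Hp Hl => [|a p IH] k /= Hp Hl; first by move: Pj; rewrite Hl.
case/andP: Hp => Hka Hp; apply: (Hstep k a Hka); exact: IH.
Qed.

Lemma T_fix0 x : nonneg x -> vle x (T x) -> x = fun _ => 0.
Proof.
move=> Hx Hle; apply: contrapT => Hne; apply: (HN (s := x)) => //.
Qed.

Lemma T_approx_sup v : nonneg v ->
  (forall d, 0 < d -> exists w, [/\ nonneg w, vle w v, vle (T w) v &
     forall i, v i - d < w i]) -> vle (T v) v.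
Proof.
move=> Hv H i; apply/ler_addgt0Pr => e e0.
have [d d0 Hd] := T_cont HG Krho Hv e0.
have [w [Hw Hwv HTw Hvw]] := H d d0.
have := Hd w Hw (fun j => ltac:(apply/distP; have := Hwv j; have := Hvw j; split; lra)) i.
move/distP => [h1 h2]; have := HTw i; lra.
Qed.

Lemma Dec_inf (P : (I -> R) -> Prop) v : nonneg v ->
  (forall w, P w -> Dec w /\ vle v w) ->
  (forall i e, 0 < e -> exists w, P w /\ w i <= v i + e) -> Dec v.
Proof.
move=> Hv H1 H2; split => // i; apply/ler_addgt0Pr => e e0.
have [w [Pw Hw]] := H2 i e e0; have [[Hw0 HTw] Hvw] := H1 w Pw.
have := T_mono HG Krho Hv Hvw i; have := HTw i; lra.
Qed.

Definition Fm (m : R) u : I -> R := fun i => Num.max (T u i) m.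
Definition useq m k := iter k (Fm m) (fun _ => m).

Lemma useq_S m k : useq m k.+1 = Fm m (useq m k). Proof. by []. Qed.

Lemma useq_ge m k i : m <= useq m k i.
Proof. by case: k => [|k] //=; rewrite /Fm le_max lexx orbT. Qed.

Lemma useq_nonneg m k : 0 <= m -> nonneg (useq m k).
Proof. by move=> m0 i; apply: le_trans m0 (useq_ge m k i). Qed.

Lemma useq_incr m k : 0 <= m -> vle (useq m k) (useq m k.+1).
Proof.
move=> m0; elim: k => [|k IH] i; first by rewrite useq_S /Fm /= le_max lexx orbT.
change (Fm m (useq m k) i <= Fm m (useq m k.+1) i); rewrite /Fm.
have := T_mono HG Krho (useq_nonneg k m0) IH i => h.
by rewrite ge_max !le_max h lexx !orbT.
Qed.

Lemma useq_mono m k k' : 0 <= m -> (k <= k')%N -> vle (useq m k) (useq m k').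
Proof.
move=> m0 /subnKC <-; elim: (k' - k)%N => [|d IH] i; first by rewrite addn0.
apply: le_trans (IH i) _; rewrite addnS; exact: useq_incr.
Qed.

Lemma Dec_above m : 0 < m -> exists v, Dec v /\ forall i, m <= v i.
Proof.
move=> m0; have m0' : 0 <= m by lra.
case: (pselect (forall i, exists k, m < useq m k i)) => [Hall|Hnot].
  exfalso.
  have [K HK] : exists K, forall i k', (K <= k')%N -> m < useq m k' i.
    apply: fin_nat => i; have [k Hk] := Hall i; exists k => k' Hk'.
    apply: lt_le_trans Hk _; exact: useq_mono.
  pose u := useq m K.
  have HuT : vle u (T u).
    move=> i; have := HK i K.+1 (leqnSn K); rewrite useq_S /Fm lt_max ltxx orbF => h.
    have := useq_incr K m0' i; rewrite useq_S /Fm (max_l (ltW h)) //.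
  have := T_fix0 (useq_nonneg K m0') HuT => /(congr1 (fun f => f i0)).
  have := useq_ge m K i0; rewrite -/u; lra.
have [i1 Hi1] : exists i1, forall k, useq m k i1 <= m.
  apply: contrapT => Hn; apply: Hnot => i; apply: contrapT => Hi.
  apply: Hn; exists i => k; rewrite leNgt; apply/negP => hk; apply: Hi; by exists k.
have Hb : forall j, exists M, forall k, useq m k j <= M.
  apply: (conn_back (P := fun j => exists M, forall k, useq m k j <= M) (j := i1)).
    by exists m.
  move=> a b Hab [M HM].
  have Kc := Kinf_comp Kxi (HgK HG Hab).
  have [y y0 Hy] := Kinf_unb (M + 1) Kc.
  exists y => k; apply/ltW; apply: (Kinf_ltinv Kc) => //; first exact: useq_nonneg.
  have h1 : xi (gamma b a (useq m k a)) <= M.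
    apply: le_trans (T_edge (useq_nonneg k m0') Hab) _.
    apply: le_trans (HM k.+1); rewrite useq_S /Fm le_max lexx //.
  rewrite /=; lra.
pose v := fun i => sup [set x | exists k, x = useq m k i].
have Hvge : forall k i, useq m k i <= v i.
  move=> k i; have [M HM] := Hb i.
  apply: (sup_ubE (M := M)); last by exists k.
  by move=> x [k' ->].
have Hv0 : nonneg v by move=> i; apply: le_trans (Hvge 0%N i); exact: useq_nonneg.
exists v; split; last by move=> i; apply: le_trans (Hvge 0%N i); exact: useq_ge.
split => //; apply: T_approx_sup => // d d0.
have [K HK] : exists K, forall i k', (K <= k')%N -> v i - d < useq m k' i.
  apply: fin_nat => i; have [M HM] := Hb i.
  have Hub : forall r : R, [set x | exists k, x = useq m k i] r -> r <= M by move=> r [k ->].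
  have E0 : [set x | exists k, x = useq m k i] (useq m 0 i) by exists 0%N.
  have [x [[k ->] Hx]] := sup_adhE E0 Hub d0.
  exists k => k' Hk'; apply: lt_le_trans Hx _; exact: (useq_mono m0' Hk' i).
exists (useq m K); split => //; first exact: useq_nonneg.
move=> i; apply: le_trans (Hvge K.+1 i); rewrite useq_S /Fm le_max lexx //.
by move=> i; apply: HK.
Qed.

Definition orb y k := iter k T y.
Lemma orb_S y k : orb y k.+1 = T (orb y k). Proof. by []. Qed.

Lemma Dec_T x : Dec x -> Dec (T x).
Proof.
rewrite /Dec => -[Hx HTx]; split; first by move=> i; exact: T_ge0.
exact: (T_mono HG Krho (fun i => T_ge0 HG Krho i Hx) HTx).
Qed.

Lemma orb_Dec y k : Dec y -> Dec (orb y k).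
Proof. by move=> Hy; elim: k => [|k IH] //; rewrite orb_S; exact: Dec_T. Qed.

Lemma orb_mono y k k' : Dec y -> (k <= k')%N -> vle (orb y k') (orb y k).
Proof.
move=> Hy /subnKC <-; elim: (k' - k)%N => [|d IH] i; first by rewrite addn0.
apply: le_trans _ (IH i); rewrite addnS orb_S; exact: (orb_Dec _ Hy).2.
Qed.

Lemma orb_to0 y e : Dec y -> 0 < e -> exists k, forall i, orb y k i <= e.
Proof.
move=> Hy e0.
pose z := fun i => inf [set x | exists k, x = orb y k i].
have lb0 : forall i x, [set x | exists k, x = orb y k i] x -> 0 <= x.
  by move=> i x [k ->]; exact: (orb_Dec k Hy).1.
have zle : forall k i, z i <= orb y k i.
  by move=> k i; apply: (inf_lbE (m := 0)) => //; [exact: lb0 | exists k].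
have z0 : nonneg z.
  by move=> i; apply: (le_infE (x := orb y 0 i)) => //; [exists 0%N | exact: lb0].
have Tz : vle (T z) z.
  move=> i; apply: (le_infE (x := orb y 0 i)); first by exists 0%N.
  move=> x [k ->]; apply: (le_trans (T_mono HG Krho z0 (zle k) i)).
  rewrite -orb_S; exact: (orb_mono Hy (leqnSn k) i).
have zT : vle z (T z).
  move=> i; apply/ler_addgt0Pr => ep ep0.
  have [d d0 Hd] := T_cont HG Krho z0 ep0.
  have [K HK] : exists K, forall j k', (K <= k')%N -> orb y k' j < z j + d.
    apply: fin_nat => j.
    have E0 : [set x | exists k, x = orb y k j] (orb y 0 j) by exists 0%N.
    have [x [[k ->] Hx]] := inf_adhE E0 (lb0 j) d0.
    exists k => k' Hk'; apply: le_lt_trans Hx; exact: orb_mono.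
  have := Hd (orb y K) (orb_Dec K Hy).1
    (fun j => ltac:(apply/distP; have := HK j K (leqnn K); have := zle K j; split; lra)) i.
  move/distP => [h1 h2]; have := zle K.+1 i; rewrite orb_S; lra.
have zz : z = fun _ => 0 by apply: T_fix0.
have [K HK] : exists K, forall j k', (K <= k')%N -> orb y k' j < e.
  apply: fin_nat => j.
  have E0 : [set x | exists k, x = orb y k j] (orb y 0 j) by exists 0%N.
  have [x [[k ->] Hx]] := inf_adhE E0 (lb0 j) e0.
  exists k => k' Hk'; apply: le_lt_trans (orb_mono Hy Hk' j) _.
  move: Hx; rewrite -/(z j) zz add0r //.
by exists K => i; apply/ltW; apply: HK.
Qed.

Lemma reach i : forall j, exists kap, Kinf kap /\ forall z, Dec z -> kap (z j) <= z i.
Proof.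
apply: (conn_back (P := fun j => exists kap, Kinf kap /\ forall z, Dec z -> kap (z j) <= z i)
  (j := i)).
  by exists (fun x => x); split => //; exact: Kinf_id.
move=> a b Hab [kap [Kk Hk]].
have Kc := Kinf_comp Kxi (HgK HG Hab).
exists (fun x => kap (xi (gamma b a x))); split; first exact: Kinf_comp.
move=> z; rewrite /Dec => -[Hz HTz]; apply: le_trans (Hk z (conj Hz HTz)).
apply: (Kinf_le Kk); first exact: (Kinf_ge0 Kc).
apply: le_trans (T_edge Hz Hab) (HTz b).
Qed.

Lemma Dec_pos i t : 0 < t -> exists2 c, 0 < c &
  forall z, Dec z -> t <= vsum z -> c <= z i.
Proof.
move=> t0.
have /choice [kap Hkap] := reach i.
have n0 : 0 < (#|I|%:R : R) by rewrite ltr0n; apply/card_gt0P; exists i0.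
have tn0 : 0 < t / #|I|%:R by apply: divr_gt0.
have [c c0 Hc] := @fin_minpos R I (fun j => kap j (t / #|I|%:R))
  (fun j => Kinf_gt0 (Hkap j).1 tn0).
exists c => // z Hz Hzt.
have [j Hj] := vsum_big i0 Hzt.
apply: le_trans (Hc j) _; apply: le_trans ((Hkap j).2 z Hz).
apply: (Kinf_le (Hkap j).1) => //; apply/ltW; exact: divr_gt0.
Qed.

Lemma Dec_unb i M : exists t, forall z, Dec z -> t <= vsum z -> M <= z i.
Proof.
have /choice [kap Hkap] := reach i.
have n0 : 0 < (#|I|%:R : R) by rewrite ltr0n; apply/card_gt0P; exists i0.
have Hj : forall j, exists r, forall r', r <= r' ->
    forall z, Dec z -> r' / #|I|%:R <= z j -> M <= z i.
  move=> j; have [x x0 Hx] := Kinf_unb M (Hkap j).1.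
  exists (x * #|I|%:R) => t' Ht' z Hz Hzj.
  apply: le_trans Hx _; apply: le_trans ((Hkap j).2 z Hz).
  apply: (Kinf_le (Hkap j).1) => //; apply: le_trans Hzj.
  by rewrite ler_pdivlMr.
have [t0 Ht0] := @fin_large R I (fun j t => forall z, Dec z -> t / #|I|%:R <= z j -> M <= z i) Hj.
exists t0 => z Hz Hzt.
have [j Hj'] := vsum_big i0 Hzt.
exact: (Ht0 j t0 (lexx _) z Hz Hj').
Qed.

End Hard1.

Section Hard2.
Local Open Scope classical_set_scope.
Variables (R : realType) (I : finType) (i0 : I) (Ii : I -> {set I})
  (gamma : I -> I -> R -> R) (mu : I -> (I -> R) -> \bar R).
Hypothesis HG : is_gain_operator Ii gamma mu.
Variable rho : R -> R.
Hypothesis Krho : Kinf rho.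
Hypothesis HN : NJI (Gam_rho Ii gamma mu rho).
Implicit Types (s u v w y z : I -> R).

Local Notation G := (Gam Ii gamma mu).
Local Notation T := (Gam_rho Ii gamma mu rho).
Local Notation Dec := (Dec Ii gamma mu rho).
Local Notation orb := (orb Ii gamma mu rho).

Lemma box_step a w b h : vle a w -> vle w b -> 0 <= h -> vsum w + h <= vsum b ->
  exists w', [/\ vle a w', vle w' b, vle w w', (forall i, w' i <= w i + h) &
     vsum w + h <= vsum w'].
Proof.
move=> Haw Hwb h0 Hs.
have [hz|hp] := eqVneq h 0.
  exists w; split.
  - exact: Haw.
  - exact: Hwb.
  - by move=> i.
  - by move=> i; rewrite hz addr0.
  - by rewrite hz addr0.
have hp' : 0 < h by rewrite lt_neqAle eq_sym hp h0.
pose D := vsum b - vsum w.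
have D0 : 0 < D by rewrite /D; lra.
pose th := h / D.
have th0 : 0 <= th by apply: divr_ge0; lra.
have th1 : th <= 1 by rewrite /th ler_pdivrMr // mul1r /D; lra.
have thD : th * D = h by rewrite /th divfK // gt_eqF.
exists (fun i => w i + th * (b i - w i)); split.
- move=> i; have := Haw i; have := Hwb i => h1 h2.
  have : 0 <= th * (b i - w i) by apply: mulr_ge0 => //; lra.
  lra.
- move=> i; have := Hwb i => h1.
  have : th * (b i - w i) <= 1 * (b i - w i) by apply: ler_wpM2r => //; lra.
  lra.
- move=> i; have := Hwb i => h1.
  have : 0 <= th * (b i - w i) by apply: mulr_ge0 => //; lra.
  lra.
- move=> i; have := vsum_diff i Hwb => h1.
  have : th * (b i - w i) <= th * D by apply: ler_wpM2l.
  lra.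
- by rewrite vsum_lin -/D thD.
Qed.

Definition Chain y w := exists k, vle (orb y k.+1) w /\ vle w (orb y k).

Lemma Chain_Dec y w : Dec y -> Chain y w -> Dec w.
Proof.
move=> Hy [k [H1 H2]].
have [Hk0 Hk1] := orb_Dec HG Krho k Hy.
have Hw : nonneg w.
  by move=> i; apply: le_trans (H1 i); exact: (orb_Dec HG Krho k.+1 Hy).1.
split => // i; apply: le_trans (T_mono HG Krho Hw H2 i) (H1 i).
Qed.

Lemma chain_step y : Dec y -> forall k w h, vle (orb y k.+1) w -> vle w (orb y k) ->
  0 <= h -> vsum w + h <= vsum y ->
  exists w', [/\ Chain y w', vle w w', (forall i, w' i <= w i + h) &
     vsum w + h <= vsum w'].
Proof.
move=> Hy; elim=> [|k IH] w h H1 H2 h0 Hs.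
  have [w' [Ha Hb Hc Hd He]] := box_step H1 H2 h0 Hs.
  by exists w'; split => //; exists 0%N.
have [Hle|Hlt] := leP (vsum w + h) (vsum (orb y k.+1)).
  have [w' [Ha Hb Hc Hd He]] := box_step H1 H2 h0 Hle.
  by exists w'; split => //; exists k.+1.
pose h1 := vsum (orb y k.+1) - vsum w.
have h10 : 0 <= h1 by rewrite /h1; have := vsum_le H2; lra.
have [w'' [Ca Cb Cc Cd]] := IH (orb y k.+1) (h - h1) (fun i => lexx _)
  (orb_mono HG Krho Hy (leqnSn k)) (ltac:(rewrite /h1; lra)) (ltac:(rewrite /h1; lra)).
exists w''; split => //.
- by move=> i; apply: le_trans (H2 i) (Cb i).
- move=> i; have := Cc i; have := vsum_diff i H2; rewrite -/h1; lra.
- move: Cd; rewrite /h1; lra.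
Qed.

Variable B : nat -> I -> R.
Hypothesis HB : forall m, Dec (B m).
Hypothesis HBm : forall m i, m%:R <= B m i.

Lemma vsum_B m : m%:R <= vsum (B m).
Proof. apply: le_trans (HBm m i0) _; exact: vsum_ge_term (HB m).1. Qed.

Lemma nat_above (r : R) : exists N : nat, r <= N%:R.
Proof. by exists (Num.trunc r).+1; apply/ltW; exact: truncnS_gt. Qed.

Definition A M w := exists m, (M <= m)%N /\ Chain (B m) w.

Lemma A_Dec M w : A M w -> Dec w.
Proof. by case=> m [_ Hc]; exact: Chain_Dec (HB m) Hc. Qed.

Lemma A_B M m : (M <= m)%N -> A M (B m).
Proof.
move=> Hm; exists m; split => //; exists 0%N; split => //=.
exact: (HB m).2.
Qed.

Definition Sset M t i := [set x | exists w, A M w /\ t <= vsum w /\ x = w i].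
Definition Inf M t i := inf (Sset M t i).

Lemma Sset_lb M t i x : Sset M t i x -> 0 <= x.
Proof. by case=> w [Aw [_ ->]]; exact: (A_Dec Aw).1. Qed.

Lemma Sset_ne M t i : exists x, Sset M t i x.
Proof.
have [N HN'] := nat_above t.
exists (B (maxn M N) i), (B (maxn M N)); split; first by apply: A_B; exact: leq_maxl.
split => //; apply: le_trans HN' _; apply: le_trans (vsum_B _).
by rewrite ler_nat leq_maxr.
Qed.

Lemma Inf_le M t i w : A M w -> t <= vsum w -> Inf M t i <= w i.
Proof. by move=> Aw Hw; apply: (inf_lbE (@Sset_lb M t i)); exists w. Qed.

Lemma Inf_ge M t i c : (forall w, A M w -> t <= vsum w -> c <= w i) -> c <= Inf M t i.
Proof.
move=> H; have [x Hx] := Sset_ne M t i.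
by apply: (le_infE Hx) => x' [w [Aw [Hw ->]]]; exact: H.
Qed.

Lemma Inf_adh M t i e : 0 < e -> exists w, [/\ A M w, t <= vsum w & w i < Inf M t i + e].
Proof.
move=> e0; have [x Hx] := Sset_ne M t i.
have [_ [[w [Aw [Hw ->]]] Hlt]] := inf_adhE Hx (@Sset_lb M t i) e0.
by exists w.
Qed.

Lemma Inf_ge0 M t i : 0 <= Inf M t i.
Proof. by apply: Inf_ge => w Aw _; exact: (A_Dec Aw).1. Qed.

Lemma Inf_Dec M t : Dec (fun i => Inf M t i).
Proof.
apply: (Dec_inf HG Krho (P := fun w => A M w /\ t <= vsum w)).
- by move=> i; exact: Inf_ge0.
- move=> w [Aw Hw]; split; first exact: (A_Dec Aw).
  by move=> i; exact: Inf_le.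
- move=> i e e0; have [w [Aw Hw Hlt]] := Inf_adh M t i e0.
  by exists w; split => //; apply/ltW.
Qed.

Lemma Inf_mono_t M t t' i : t <= t' -> Inf M t i <= Inf M t' i.
Proof.
move=> Ht; apply: Inf_ge => w Aw Hw; apply: Inf_le => //; exact: le_trans Hw.
Qed.

Lemma Inf_mono_M M M' t i : (M <= M')%N -> Inf M t i <= Inf M' t i.
Proof.
move=> HM; apply: Inf_ge => w [m [Hm Hc]] Hw; apply: Inf_le => //.
by exists m; split => //; exact: leq_trans Hm.
Qed.

Lemma Inf_lip M t h i : 0 <= t -> 0 <= h -> t + h <= M%:R ->
  Inf M (t + h) i <= Inf M t i + h.
Proof.
move=> t0 h0 Hth.
suff : Inf M (t + h) i - h <= Inf M t i by lra.
apply: Inf_ge => w Aw Hw.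
have [Hle|Hlt] := leP (t + h) (vsum w).
  have := Inf_le i Aw Hle; lra.
case: Aw => m [Hm [k [Hk1 Hk2]]].
pose h' := t + h - vsum w.
have Hsum : vsum w + h' <= vsum (B m).
  rewrite /h' addrC subrK; apply: le_trans Hth _; apply: le_trans (vsum_B m).
  by rewrite ler_nat.
have hpos : 0 <= h' by rewrite /h'; lra.
have [w' [Cw' Hww' Hw'i Hs']] := chain_step (HB m) Hk1 Hk2 hpos Hsum.
have Aw' : A M w' by exists m.
have Hs2 : t + h <= vsum w' by move: Hs'; rewrite /h' addrC subrK.
have := Inf_le i Aw' Hs2.
have := Hw'i i; rewrite /h'; lra.
Qed.

Lemma Inf_zero M i : Inf M 0 i <= 0.
Proof.
apply/ler_addgt0Pr => e e0.
have [k Hk] := orb_to0 HG Krho HN (HB M) e0.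
rewrite add0r; apply: le_trans (Hk i).
apply: Inf_le; last exact: vsum_ge0 (orb_Dec HG Krho k (HB M)).1.
exists M; split => //; exists k; split => //.
exact: (orb_mono HG Krho (HB M) (leqnSn k)).
Qed.

Lemma Inf_le_t M t i : 0 <= t -> Inf M t i <= t.
Proof.
move=> t0; have [N HN'] := nat_above t.
apply: le_trans (Inf_mono_M t i (leq_maxl M N)) _.
have := @Inf_lip (maxn M N) 0 t i (lexx 0) t0.
rewrite add0r => h; apply: le_trans (h _) _.
  apply: le_trans HN' _; by rewrite ler_nat leq_maxr.
have := Inf_zero (maxn M N) i; lra.
Qed.

Definition X t i := sup [set x | exists M, x = Inf M t i].

Lemma Inf_le_X M t i : 0 <= t -> Inf M t i <= X t i.
Proof.
move=> t0; apply: (sup_ubE (M := t)); last by exists M.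
by move=> x [M' ->]; exact: Inf_le_t.
Qed.

Lemma X_le_t t i : 0 <= t -> X t i <= t.
Proof.
move=> t0; apply: (ge_supE (x := Inf 0 t i)); first by exists 0%N.
by move=> x [M' ->]; exact: Inf_le_t.
Qed.

Lemma X_ge0 t i : 0 <= t -> 0 <= X t i.
Proof. by move=> t0; apply: le_trans (Inf_ge0 0 t i) (Inf_le_X 0 i t0). Qed.

Lemma X_Dec t : 0 <= t -> Dec (X t).
Proof.
move=> t0; have Hv : nonneg (X t) by move=> i; exact: X_ge0.
split => //; apply: (T_approx_sup HG Krho Hv) => d d0.
have [K HK] : exists K, forall i k', (K <= k')%N -> X t i - d < Inf k' t i.
  apply: fin_nat => i.
  have E0 : [set x | exists M, x = Inf M t i] (Inf 0 t i) by exists 0%N.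
  have Hub : forall r, [set x | exists M, x = Inf M t i] r -> r <= t.
    by move=> r [M ->]; exact: Inf_le_t.
  have [x [[k ->] Hx]] := sup_adhE E0 Hub d0.
  exists k => k' Hk'; apply: lt_le_trans Hx _; exact: Inf_mono_M.
exists (fun i => Inf K t i); split.
- by move=> i; exact: Inf_ge0.
- by move=> i; exact: Inf_le_X.
- move=> i; apply: le_trans ((Inf_Dec K t).2 i) _; exact: Inf_le_X.
- by move=> i; apply: HK.
Qed.

Lemma X_mono t t' i : 0 <= t -> t <= t' -> X t i <= X t' i.
Proof.
move=> t0 tt; apply: (ge_supE (x := Inf 0 t i)); first by exists 0%N.
move=> x [M ->]; apply: le_trans (Inf_mono_t M i tt) _.
apply: Inf_le_X; lra.
Qed.

Lemma X_lip t h i : 0 <= t -> 0 <= h -> X (t + h) i <= X t i + h.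
Proof.
move=> t0 h0; apply: (ge_supE (x := Inf 0 (t + h) i)); first by exists 0%N.
move=> x [M ->]; have [N HN'] := nat_above (t + h).
apply: le_trans (Inf_mono_M (t + h) i (leq_maxl M N)) _.
apply: le_trans (Inf_lip i t0 h0 _) _.
  apply: le_trans HN' _; by rewrite ler_nat leq_maxr.
have := Inf_le_X (maxn M N) i t0; lra.
Qed.

Lemma X_lb t i c : 0 <= t -> (forall z, Dec z -> t <= vsum z -> c <= z i) -> c <= X t i.
Proof.
move=> t0 H; apply: le_trans (Inf_le_X 0 i t0).
apply: Inf_ge => w Aw Hw; apply: H => //; exact: (A_Dec Aw).
Qed.

Lemma X0 : X 0 = fun _ => 0.
Proof.
apply: funext => i; apply/eqP; rewrite eq_le X_le_t ?lexx //=; exact: X_ge0.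
Qed.

End Hard2.

Section Reg.
Variable R : realType.
Implicit Types (x y u : R).

Lemma Kinf_lip (f : R -> R) (C : R) : 0 <= C -> f 0 = 0 ->
  (forall x y, 0 <= x -> x < y -> f x < f y) ->
  (forall x y, 0 <= x -> x <= y -> f y - f x <= (y - x) * (C + y)) ->
  (forall M, exists2 x, 0 <= x & M <= f x) -> Kinf f.
Proof.
move=> C0 f0 fi fl fu; split => // x x0 e e0.
pose K := C + x + 1.
have K0 : 0 < K by rewrite /K; lra.
exists (Num.min 1 (e / K)); first by rewrite lt_min ltr01 divr_gt0.
move=> y y0; rewrite lt_min => /andP[h1 h2].
have hK : `|x - y| * K < e by rewrite -ltr_pdivlMr.
apply/distP.
have [xy|yx] := leP x y.
- have hm : f x <= f y.
    case: (eqVneq x y) => [->|ne]; first exact: lexx.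
    by apply/ltW/fi => //; rewrite lt_neqAle ne xy.
  have hf := fl x y x0 xy.
  have ea : `|x - y| = y - x by rewrite distrC ger0_norm // subr_ge0.
  rewrite ea in h1 hK.
  have : (y - x) * (C + y) <= (y - x) * K by apply: ler_wpM2l; [lra | rewrite /K; lra].
  lra.
- have hm := fi y x y0 yx.
  have hf := fl y x y0 (ltW yx).
  have ea : `|x - y| = x - y by rewrite ger0_norm // subr_ge0 ltW.
  rewrite ea in h1 hK.
  have : (x - y) * (C + x) <= (x - y) * K by apply: ler_wpM2l; [lra | rewrite /K; lra].
  lra.
Qed.

Definition hh u := u / (1 + u).

Lemma hh_ge0 u : 0 <= u -> 0 <= hh u.
Proof. by move=> u0; apply: divr_ge0 => //; lra. Qed.

Lemma hh_le1 u : 0 <= u -> hh u <= 1.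
Proof. by move=> u0; rewrite /hh ler_pdivrMr; lra. Qed.

Lemma hh_diff x y : 0 <= x -> 0 <= y -> hh y - hh x = (y - x) / ((1 + x) * (1 + y)).
Proof.
move=> x0 y0; rewrite /hh.
have h1 : 1 + x != 0 by rewrite gt_eqF //; lra.
have h2 : 1 + y != 0 by rewrite gt_eqF //; lra.
by field; rewrite h1 h2.
Qed.

Lemma hh_dup x y : 0 <= x -> x <= y -> hh y - hh x <= y - x.
Proof.
move=> x0 xy; rewrite hh_diff //; last lra.
rewrite ler_pdivrMr; last by apply: mulr_gt0; lra.
have : 1 <= (1 + x) * (1 + y) by nra.
nra.
Qed.

Lemma hh_dlo x y : 0 <= x -> x <= y -> (y - x) / ((1 + y) * (1 + y)) <= hh y - hh x.
Proof.
move=> x0 xy; rewrite hh_diff //; last lra.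
apply: ler_wpM2l; first lra.
rewrite lef_pV2 ?posrE; try (apply: mulr_gt0; lra).
apply: ler_wpM2r; lra.
Qed.

Lemma hh_lt x y : 0 <= x -> x < y -> hh x < hh y.
Proof.
move=> x0 xy; have := hh_dlo x0 (ltW xy).
have : 0 < (y - x) / ((1 + y) * (1 + y)) by apply: divr_gt0; [lra | apply: mulr_gt0; lra].
lra.
Qed.

Variable b : R -> R.
Hypothesis b0 : forall u, 0 <= u -> 0 <= b u.
Hypothesis bmono : forall u u', 0 <= u -> u <= u' -> b u <= b u'.
Hypothesis blip : forall u u', 0 <= u -> u <= u' -> b u' - b u <= u' - u.
Hypothesis ble : forall u, 0 <= u -> b u <= u.
Hypothesis bpos : forall u, 0 < u -> 0 < b u.
Hypothesis bunb : forall M, exists2 u, 0 <= u & M <= b u.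

Definition ee u := b (u / 2) * hh u.

Lemma ee0 : ee 0 = 0. Proof. by rewrite /ee /hh !mul0r mulr0. Qed.

Lemma ee_ge0 u : 0 <= u -> 0 <= ee u.
Proof. by move=> u0; apply: mulr_ge0; [apply: b0; lra | exact: hh_ge0]. Qed.

Lemma ee_le_b u : 0 <= u -> ee u <= b u.
Proof.
move=> u0; rewrite /ee; apply: le_trans (_ : b (u / 2) <= _).
  rewrite -[X in _ <= X]mulr1; apply: ler_wpM2l; [apply: b0; lra | exact: hh_le1].
apply: bmono; lra.
Qed.

Lemma ee_up x y : 0 <= x -> x <= y -> ee y - ee x <= (y - x) * (1 + y).
Proof.
move=> x0 xy; rewrite /ee.
have h1 := blip (ltac:(lra) : 0 <= x / 2) (ltac:(lra) : x / 2 <= y / 2).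
have h2 := hh_dup x0 xy.
have h3 := ble (ltac:(lra) : 0 <= x / 2).
have h4 := b0 (ltac:(lra) : 0 <= x / 2).
have h5 := hh_le1 (ltac:(lra) : 0 <= y).
have h6 := hh_ge0 (ltac:(lra) : 0 <= y).
have h7 := hh_ge0 x0.
have h8 := bmono (ltac:(lra) : 0 <= x / 2) (ltac:(lra) : x / 2 <= y / 2).
nra.
Qed.

Lemma ee_lo x y : 0 <= x -> x <= y ->
  b (x / 2) * ((y - x) / ((1 + y) * (1 + y))) <= ee y - ee x.
Proof.
move=> x0 xy; rewrite /ee.
have h2 := hh_dlo x0 xy.
have h4 := b0 (ltac:(lra) : 0 <= x / 2).
have h6 := hh_ge0 (ltac:(lra) : 0 <= y).
have h8 := bmono (ltac:(lra) : 0 <= x / 2) (ltac:(lra) : x / 2 <= y / 2).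
nra.
Qed.

Lemma ee_lt x y : 0 <= x -> x < y -> ee x < ee y.
Proof.
move=> x0 xy; rewrite /ee.
have h1 := hh_lt x0 xy.
have h4 := b0 (ltac:(lra) : 0 <= x / 2).
have h7 := hh_ge0 x0.
have h8 := bmono (ltac:(lra) : 0 <= x / 2) (ltac:(lra) : x / 2 <= y / 2).
have h9 := bpos (ltac:(lra) : 0 < y / 2).
nra.
Qed.

Lemma ee_unb M : exists2 x, 0 <= x & M <= ee x.
Proof.
have [u u0 Hu] := bunb (3 * M).
exists (2 * u + 2); first lra.
rewrite /ee.
have -> : (2 * u + 2) / 2 = u + 1 by field.
have h1 := bmono u0 (ltac:(lra) : u <= u + 1).
have h2 : 2 / 3 <= hh (2 * u + 2).
  rewrite /hh ler_pdivlMr; lra.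
have h3 := b0 u0.
have h4 : 0 <= b (u + 1) by apply: b0; lra.
nra.
Qed.

Lemma Kinf_ee : Kinf ee.
Proof.
apply: (Kinf_lip (C := 1)) => //; first exact: ee0.
- by move=> x y x0 xy; exact: ee_lt.
- by move=> x y x0 xy; exact: ee_up.
- exact: ee_unb.
Qed.

End Reg.

Section Sums2.
Local Open Scope classical_set_scope.
Variables (R : realType) (I : finType).
Lemma vsum_dist (a b : I -> R) c : (forall i, `|a i - b i| <= c) ->
  `|vsum a - vsum b| <= #|I|%:R * c.
Proof.
move=> H; rewrite /vsum -sumrB; apply: le_trans (ler_norm_sum _ _ _) _.
apply: le_trans (ler_sum _ (fun i _ => H i)) _.
by rewrite sumr_const mulr_natl.
Qed.
End Sums2.

Section Hard3.
Local Open Scope classical_set_scope.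
Variables (R : realType) (I : finType) (i0 : I) (Ii : I -> {set I})
  (gamma : I -> I -> R -> R) (mu : I -> (I -> R) -> \bar R).
Hypothesis HG : is_gain_operator Ii gamma mu.
Variable rho : R -> R.
Hypothesis Krho : Kinf rho.
Variable xi : R -> R.
Hypothesis Kxi : Kinf xi.
Hypothesis Hxi : forall s i j, nonneg s -> j \in Ii i ->
  xi (gamma i j (s j)) <= Gam Ii gamma mu s i.
Hypothesis HIn : forall i, exists j, j \in Ii i.

Local Notation G := (Gam Ii gamma mu).
Local Notation T := (Gam_rho Ii gamma mu rho).
Local Notation Dec := (Dec Ii gamma mu rho).

Variable X : R -> I -> R.
Hypothesis HXD : forall t, 0 <= t -> Dec (X t).
Hypothesis HXm : forall t t' i, 0 <= t -> t <= t' -> X t i <= X t' i.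
Hypothesis HXl : forall t h i, 0 <= t -> 0 <= h -> X (t + h) i <= X t i + h.
Hypothesis HXt : forall t i, 0 <= t -> X t i <= t.
Hypothesis HX0 : X 0 = fun _ => 0.
Hypothesis HXpos : forall t i, 0 < t -> 0 < X t i.
Hypothesis HXunb : forall i M, exists2 t, 0 <= t & M <= X t i.

Definition nu (x : R) := rho x / 2.
Lemma Knu : Kinf nu. Proof. exact: Kinf_half. Qed.
Local Notation Tn := (Gam_rho Ii gamma mu nu).

Definition L t i := Tn (X t) i.
Definition gg t i := nu (G (X t) i).
Definition phi t := t + vsum (fun i => L t i + gg t i).

Lemma XN t : 0 <= t -> nonneg (X t). Proof. by move=> t0; case: (HXD t0). Qed.

Lemma X_dist t t' i : 0 <= t -> 0 <= t' -> `|X t i - X t' i| <= `|t - t'|.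
Proof.
move=> t0 t'0; have [tt|tt] := leP t t'.
- have := HXl i t0 (ltac:(lra) : 0 <= t' - t); rewrite addrC subrK => h1.
  have := HXm i t0 tt => h2.
  rewrite distrC (distrC t) !ger0_norm; lra.
- have := HXl i t'0 (ltac:(lra) : 0 <= t - t'); rewrite addrC subrK => h1.
  have := HXm i t'0 (ltac:(lra) : t' <= t) => h2.
  rewrite !ger0_norm; lra.
Qed.

Lemma LE t i : L t i = G (X t) i + gg t i. Proof. by []. Qed.

Lemma G_ge0' t i : 0 <= t -> 0 <= G (X t) i.
Proof. by move=> t0; exact: (Gam_ge0 HG i (XN t0)). Qed.

Lemma gg_ge0 t i : 0 <= t -> 0 <= gg t i.
Proof. by move=> t0; apply: (Kinf_ge0 Knu); exact: G_ge0'. Qed.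

Lemma L_ge0 t i : 0 <= t -> 0 <= L t i.
Proof. by move=> t0; rewrite LE; have := G_ge0' i t0; have := gg_ge0 i t0; lra. Qed.

Lemma G_mono' t t' i : 0 <= t -> t <= t' -> G (X t) i <= G (X t') i.
Proof. by move=> t0 tt; exact: (Gam_mono HG (XN t0) (fun j => HXm j t0 tt) i). Qed.

Lemma gg_mono t t' i : 0 <= t -> t <= t' -> gg t i <= gg t' i.
Proof. by move=> t0 tt; apply: (Kinf_le Knu); [exact: G_ge0' | exact: G_mono']. Qed.

Lemma L_mono t t' i : 0 <= t -> t <= t' -> L t i <= L t' i.
Proof.
by move=> t0 tt; rewrite !LE; have := G_mono' i t0 tt; have := gg_mono i t0 tt; lra.
Qed.

Lemma Lgg_le_X t i : 0 <= t -> L t i + gg t i <= X t i.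
Proof.
move=> t0; apply: le_trans ((HXD t0).2 i); rewrite LE TE /gg /nu; lra.
Qed.

Lemma phi_diff t t' i : 0 <= t -> t <= t' ->
  [/\ t' - t <= phi t' - phi t, L t' i - L t i <= phi t' - phi t
    & gg t' i - gg t i <= phi t' - phi t].
Proof.
move=> t0 tt.
have Ha : vle (fun i => L t i + gg t i) (fun i => L t' i + gg t' i).
  by move=> j /=; have := L_mono j t0 tt; have := gg_mono j t0 tt; lra.
have hs := vsum_le Ha.
have hd := vsum_diff i Ha; rewrite /= in hd.
have := L_mono i t0 tt; have := gg_mono i t0 tt.
rewrite /phi; split; lra.
Qed.

Lemma phi0 : phi 0 = 0.
Proof.
rewrite /phi add0r /vsum big1 // => i _.
rewrite /L /gg HX0 T0 ?Gam0 //; last exact: Knu.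
by case: Knu => ->; rewrite addr0.
Qed.

Lemma phi_ge t : 0 <= t -> t + gg t i0 <= phi t.
Proof.
move=> t0; rewrite /phi lerD2l.
apply: le_trans (vsum_ge_term i0 _); first by rewrite /= lerDr; exact: L_ge0.
by move=> j /=; have := L_ge0 j t0; have := gg_ge0 j t0; lra.
Qed.

Lemma phi_ge_t t : 0 <= t -> t <= phi t.
Proof. by move=> t0; have := phi_ge t0; have := gg_ge0 i0 t0; lra. Qed.

Lemma phi_cont t e : 0 <= t -> 0 < e -> exists2 d, 0 < d &
  forall t', 0 <= t' -> `|t - t'| < d -> `|phi t - phi t'| < e.
Proof.
move=> t0 e0.
pose n : R := #|I|%:R.
have n0 : 0 <= n by rewrite /n ler0n.
pose e1 := e / (8 * n + 8).
have e10 : 0 < e1 by apply: divr_gt0; lra.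
have e1E : e1 * (8 * n + 8) = e by rewrite /e1 divfK // gt_eqF //; lra.
have [d1 d10 Hd1] := T_cont HG Knu (XN t0) e10.
have [d2 d20 Hd2] := Gam_cont HG (XN t0) e10.
exists (Num.min (Num.min d1 d2) (e / 2)).
  by rewrite !lt_min d10 d20 /=; lra.
move=> t' t'0; rewrite !lt_min => /andP[/andP[h1 h2] h3].
have HX : forall j, `|X t j - X t' j| < d1 /\ `|X t j - X t' j| < d2.
  by move=> j; have := X_dist j t0 t'0; split; lra.
have HL := Hd1 (X t') (XN t'0) (fun j => (HX j).1).
have HGd := Hd2 (X t') (XN t'0) (fun j => (HX j).2).
have Hsum : `|vsum (fun i => L t i + gg t i) - vsum (fun i => L t' i + gg t' i)| <= n * (3 * e1).
  apply: vsum_dist => i /=.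
  have /distP [a1 a2] := HL i; have /distP [b1 b2] := HGd i.
  rewrite !TE in a1 a2.
  rewrite /L /gg !TE; apply/distP'; split; lra.
rewrite /phi; move/distP': Hsum => [s1 s2]; move/distP: h3 => [c1 c2].
apply/distP.
have : n * e1 * 8 <= e by nra.
split; nra.
Qed.

Definition tau u := sup [set t | 0 <= t /\ phi t <= u].

Lemma tau_set_ub u t : [set t | 0 <= t /\ phi t <= u] t -> t <= u.
Proof. by case=> t0 h; apply: le_trans (phi_ge_t t0) h. Qed.

Lemma tau_in0 u : 0 <= u -> [set t | 0 <= t /\ phi t <= u] 0.
Proof. by move=> u0; split; rewrite ?phi0. Qed.

Lemma tau_ub u t : 0 <= t -> phi t <= u -> t <= tau u.
Proof. by move=> t0 h; apply: (sup_ubE (@tau_set_ub u)). Qed.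

Lemma tau_ge0 u : 0 <= u -> 0 <= tau u.
Proof. by move=> u0; apply: tau_ub; rewrite ?phi0. Qed.

Lemma tau_le u : 0 <= u -> tau u <= u.
Proof. by move=> u0; apply: ge_supE (tau_in0 u0) (@tau_set_ub u). Qed.

Lemma phi_tau u : 0 <= u -> phi (tau u) = u.
Proof.
move=> u0; have ta0 := tau_ge0 u0.
apply/eqP; rewrite eq_le; apply/andP; split.
- apply/ler_addgt0Pr => e e0.
  have [d d0 Hd] := phi_cont ta0 e0.
  have [t [[t0 Ht] Htl]] := sup_adhE (tau_in0 u0) (@tau_set_ub u) d0.
  have tle : t <= tau u by apply: tau_ub.
  have hd : `|tau u - t| < d by rewrite -/(tau u) in Htl; apply/distP; split; lra.
  have := Hd t t0 hd; move/distP => [h1 h2]; lra.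
- rewrite leNgt; apply/negP => hlt.
  have e0 : 0 < u - phi (tau u) by lra.
  have [d d0 Hd] := phi_cont ta0 e0.
  have hp : 0 <= tau u + d / 2 by lra.
  have hd : `|tau u - (tau u + d / 2)| < d by apply/distP; split; lra.
  have := Hd (tau u + d / 2) hp hd.
  move/distP => [h1 h2].
  have hq : phi (tau u + d / 2) <= u by lra.
  have := tau_ub hp hq; lra.
Qed.

Lemma tau_mono u u' : 0 <= u -> u <= u' -> tau u <= tau u'.
Proof. by move=> u0 uu; apply: tau_ub; [exact: tau_ge0 | rewrite phi_tau //; lra]. Qed.

Lemma tau_lip u u' i : 0 <= u -> u <= u' ->
  [/\ tau u' - tau u <= u' - u, L (tau u') i - L (tau u) i <= u' - u
    & gg (tau u') i - gg (tau u) i <= u' - u].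
Proof.
move=> u0 uu; have [h1 h2 h3] := phi_diff i (tau_ge0 u0) (tau_mono u0 uu).
rewrite !phi_tau // in h1 h2 h3; lra.
Qed.

Lemma tau0 : tau 0 = 0.
Proof. by apply/eqP; rewrite eq_le tau_le ?tau_ge0 ?lexx. Qed.

Lemma tau_pos u : 0 < u -> 0 < tau u.
Proof.
move=> u0; rewrite lt_neqAle tau_ge0 ?andbT; last lra.
apply/eqP => h; have := phi_tau (ltW u0); rewrite -h phi0; lra.
Qed.

Definition bb u := \big[Num.min/gg (tau u) i0]_i gg (tau u) i.

Lemma bb_le u i : bb u <= gg (tau u) i.
Proof. exact: bigmin_le. Qed.

Lemma bb_ge c u : c <= gg (tau u) i0 -> (forall i, c <= gg (tau u) i) -> c <= bb u.
Proof. by move=> h1 h2; apply: le_bigmin. Qed.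

Lemma bb0 u : 0 <= u -> 0 <= bb u.
Proof. by move=> u0; apply: bb_ge => *; apply: gg_ge0; exact: tau_ge0. Qed.

Lemma bb_mono u u' : 0 <= u -> u <= u' -> bb u <= bb u'.
Proof.
move=> u0 uu; apply: bb_ge.
  apply: le_trans (bb_le u i0) _; apply: gg_mono; [exact: tau_ge0 | exact: tau_mono].
move=> i; apply: le_trans (bb_le u i) _; apply: gg_mono; [exact: tau_ge0 | exact: tau_mono].
Qed.

Lemma bb_lip u u' : 0 <= u -> u <= u' -> bb u' - bb u <= u' - u.
Proof.
move=> u0 uu; suff : bb u' - (u' - u) <= bb u by lra.
apply: bb_ge; last by move=> i; have [_ _ h] := tau_lip i u0 uu; have := bb_le u' i; lra.
have [_ _ h] := tau_lip i0 u0 uu; have := bb_le u' i0; lra.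
Qed.

Lemma bb_le_u u : 0 <= u -> bb u <= u.
Proof.
move=> u0; apply: le_trans (bb_le u i0) _.
have := phi_ge (tau_ge0 u0); rewrite phi_tau //; have := tau_ge0 u0; lra.
Qed.

Lemma gg_pos t i : 0 < t -> 0 < gg t i.
Proof.
move=> t0; have [j Hj] := HIn i.
rewrite /gg; apply: (Kinf_gt0 Knu); apply: lt_le_trans _ (@Hxi (X t) i j (XN (ltW t0)) Hj).
apply: (Kinf_gt0 Kxi); apply: (Kinf_gt0 (HgK HG Hj)); exact: HXpos.
Qed.

Lemma bb_pos u : 0 < u -> 0 < bb u.
Proof.
move=> u0; have tp := tau_pos u0.
rewrite /bb; elim/big_ind: _ => //; first exact: gg_pos.
  by move=> a b ha hb; rewrite lt_min ha hb.
by move=> i _; exact: gg_pos.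
Qed.

Lemma gg_unb i M : exists r, forall t, r <= t -> M <= gg t i.
Proof.
have [j Hj] := HIn i.
have Kc := Kinf_comp Knu (Kinf_comp Kxi (HgK HG Hj)).
have [y y0 Hy] := Kinf_unb M Kc.
have [t t0 Ht] := HXunb j y.
exists t => t' tt'; apply: le_trans Hy _; apply: le_trans (gg_mono i t0 tt').
rewrite /gg; apply: (Kinf_le Knu).
  by apply: (Kinf_ge0 Kxi); apply: (Kinf_ge0 (HgK HG Hj)).
apply: le_trans (@Hxi (X t) i j (XN t0) Hj); apply: (Kinf_le Kxi).
  by apply: (Kinf_ge0 (HgK HG Hj)).
exact: (Kinf_le (HgK HG Hj)).
Qed.

Lemma bb_unb M : exists2 u, 0 <= u & M <= bb u.
Proof.
have [r Hr] := @fin_large R I (fun i t => M <= gg t i)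
  (fun i => ltac:(have [r Hr] := gg_unb i M; by exists r)).
pose t := Num.max r 0.
have t0 : 0 <= t by rewrite le_max lexx orbT.
have u0 : 0 <= phi t by apply: le_trans (phi_ge_t t0).
exists (phi t) => //.
have tt : t <= tau (phi t) by apply: tau_ub.
apply: bb_ge; last by move=> i; apply: Hr; apply: le_trans tt; rewrite le_max lexx.
apply: Hr; apply: le_trans tt; by rewrite le_max lexx.
Qed.

Definition sig u i := L (tau u) i + ee bb u.
Local Notation E := (ee bb).

Lemma KE : Kinf E.
Proof. exact: (Kinf_ee bb0 bb_mono bb_lip bb_le_u bb_pos bb_unb). Qed.

Lemma E_ge0 u : 0 <= u -> 0 <= E u.
Proof. by move=> u0; apply: (ee_ge0 bb0). Qed.

Lemma sig_ge_E u i : 0 <= u -> E u <= sig u i.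
Proof. by move=> u0; rewrite /sig lerDr; apply: L_ge0; exact: tau_ge0. Qed.

Lemma sig_le_X u i : 0 <= u -> sig u i <= X (tau u) i.
Proof.
move=> u0; have := Lgg_le_X i (tau_ge0 u0).
have := ee_le_b bb0 bb_mono u0; have := bb_le u i; rewrite /sig; lra.
Qed.

Lemma sig_le_u u i : 0 <= u -> sig u i <= u.
Proof.
move=> u0; apply: le_trans (sig_le_X i u0) _.
apply: le_trans (HXt i (tau_ge0 u0)) _; exact: tau_le.
Qed.

Lemma sig_lip x y i : 0 <= x -> x <= y -> sig y i - sig x i <= (y - x) * (2 + y).
Proof.
move=> x0 xy; have [_ h _] := tau_lip i x0 xy.
have := ee_up bb0 bb_mono bb_lip bb_le_u x0 xy.
rewrite /sig; nra.
Qed.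

Lemma sig_lt x y i : 0 <= x -> x < y -> sig x i < sig y i.
Proof.
move=> x0 xy; have := L_mono i (tau_ge0 x0) (tau_mono x0 (ltW xy)).
have := ee_lt bb0 bb_mono bb_pos x0 xy; rewrite /sig; lra.
Qed.

Lemma sig0 i : sig 0 i = 0.
Proof.
rewrite /sig tau0 ee0 addr0 /L HX0; exact: (T0 HG Knu i).
Qed.

Lemma Kinf_sig i : Kinf (fun r => sig r i).
Proof.
apply: (Kinf_lip (C := 2)) => //.
- exact: sig0.
- by move=> x y x0 xy; exact: sig_lt.
- by move=> x y x0 xy; exact: sig_lip.
- move=> M; have [x x0 Hx] := Kinf_unb M KE; exists x => //.
  apply: le_trans Hx (sig_ge_E i x0).
Qed.

Lemma sig_decay r : 0 <= r -> vle (Tn (sig r)) (sig r).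
Proof.
move=> r0 i.
have Hn : nonneg (sig r) by move=> j; apply: le_trans (E_ge0 r0) (sig_ge_E j r0).
have Hle : vle (sig r) (X (tau r)) by move=> j; exact: sig_le_X.
apply: le_trans (T_mono HG Knu Hn Hle i) _.
rewrite -/(L (tau r) i) /sig lerDl; exact: E_ge0.
Qed.

Lemma compact_bounds (K : set R) : compact K -> K `<=` `]0, +oo[ -> K !=set0 ->
  exists a b, 0 < a /\ forall r, K r -> a <= r <= b.
Proof.
move=> cK HK K0.
have cid : {within K, continuous (fun x : R => x)}.
  by apply: continuous_subspaceT => x; exact: cvg_id.
have [a aK Ha] := compact_EVT_min K0 cK cid.
have [b bK Hb] := compact_EVT_max K0 cK cid.
exists a, b; split.
  have := HK a (set_mem aK); by rewrite /= in_itv /= andbT.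
move=> r Kr; rewrite Ha ?Hb //; exact: mem_set.
Qed.

Lemma sig_bilip (K : set R) : compact K -> K `<=` `]0, +oo[ ->
  exists l L, [/\ 0 < l, l <= L &
    forall i r1 r2 t1 t2, K r1 -> K r2 -> 0 <= t1 -> 0 <= t2 ->
      sig t1 i = r1 -> sig t2 i = r2 ->
      l * `|r1 - r2| <= `|t1 - t2| <= L * `|r1 - r2|].
Proof.
move=> cK HK.
case: (pselect (K !=set0)) => [K0|K0]; last first.
  exists 1, 1; split => // i r1 *; exfalso; apply: K0; by exists r1.
have [a [b [a0 Hab]]] := compact_bounds cK HK K0.
have [tb tb0 Htb] := Kinf_unb (b + 1) KE.
have Hrange : forall i t r, K r -> 0 <= t -> sig t i = r -> a <= t /\ t <= tb.
  move=> i t r Kr t0 Hr; have /andP[h1 h2] := Hab r Kr; split.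
    by apply: le_trans h1 _; rewrite -Hr; exact: sig_le_u.
  apply/ltW; apply: (Kinf_ltinv KE) => //.
  by apply: le_lt_trans (sig_ge_E i t0) _; rewrite Hr; lra.
pose c := bb (a / 2) / ((1 + tb) * (1 + tb)).
pose C := 2 + tb.
have atb : a <= tb.
  have [r Kr] := K0; have /andP[h1 h2] := Hab r Kr.
  have := sig_ge_E i0 tb0; have := sig_le_u i0 tb0; lra.
have c0 : 0 < c by apply: divr_gt0; [apply: bb_pos; lra | apply: mulr_gt0; lra].
have C0 : 0 < C by rewrite /C; lra.
have key : forall i t1 t2, a <= t1 -> t1 <= t2 -> t2 <= tb ->
    c * (t2 - t1) <= sig t2 i - sig t1 i <= C * (t2 - t1).
  move=> i t1 t2 h1 h2 h3; apply/andP; split.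
  - have t10 : 0 <= t1 by lra.
    have hlo := ee_lo bb0 bb_mono t10 h2.
    have hL := L_mono i (tau_ge0 t10) (tau_mono t10 h2).
    suff : c * (t2 - t1) <= bb (t1 / 2) * ((t2 - t1) / ((1 + t2) * (1 + t2))).
      rewrite /sig; lra.
    rewrite /c mulrAC -mulrA; apply: ler_pM.
    + apply: bb0; lra.
    + apply: mulr_ge0; first lra; rewrite invr_ge0; apply: mulr_ge0; lra.
    + apply: bb_mono; lra.
    + apply: ler_wpM2l; first lra.
      rewrite lef_pV2 ?posrE; try (apply: mulr_gt0; lra).
      apply: ler_pM; lra.
  - have := sig_lip i (ltac:(lra) : 0 <= t1) h2; rewrite /C => h.
    have : (t2 - t1) * (2 + t2) <= (t2 - t1) * (2 + tb) by apply: ler_wpM2l; lra.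
    lra.
pose LL := Num.max c^-1 C^-1.
exists C^-1, LL; split.
- by rewrite invr_gt0.
- by rewrite /LL le_max lexx orbT.
have key2 : forall i t1 t2, a <= t1 -> t1 <= t2 -> t2 <= tb ->
    C^-1 * (sig t2 i - sig t1 i) <= t2 - t1 <= LL * (sig t2 i - sig t1 i).
  move=> i t1 t2 h1 h2 h3; have /andP[k1 k2] := key i t1 t2 h1 h2 h3.
  have D0 : 0 <= sig t2 i - sig t1 i.
    have : 0 <= c * (t2 - t1) by apply: mulr_ge0; lra.
    lra.
  apply/andP; split.
  - rewrite mulrC ler_pdivrMr //; nra.
  - apply: (@le_trans _ _ (c^-1 * (sig t2 i - sig t1 i))).
      rewrite mulrC ler_pdivlMr //; nra.
    by apply: ler_wpM2r => //; rewrite /LL le_max lexx.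
move=> i r1 r2 t1 t2 K1 K2 t10 t20 H1 H2.
have [a1 b1] := Hrange i t1 r1 K1 t10 H1.
have [a2 b2] := Hrange i t2 r2 K2 t20 H2.
have [tt|tt] := leP t1 t2.
- have /andP[k1 k2] := key2 i t1 t2 a1 tt b2.
  have D0 : sig t1 i <= sig t2 i.
    case: (eqVneq t1 t2) => [->|ne]; first exact: lexx.
    by apply/ltW; apply: sig_lt => //; rewrite lt_neqAle ne tt.
  rewrite distrC (distrC t1) !ger0_norm ?subr_ge0 -?H1 -?H2 //.
  by rewrite k1 k2.
- have /andP[k1 k2] := key2 i t2 t1 a2 (ltW tt) b1.
  have D0 : sig t2 i <= sig t1 i by apply/ltW; apply: sig_lt.
  rewrite !ger0_norm ?subr_ge0 -?H1 -?H2 //; last exact: ltW.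
  by rewrite k1 k2.
Qed.

Lemma path_exists : exists sigma, path_of_strict_decay Ii gamma mu sigma.
Proof.
exists sig; split.
- exists nu; split; first exact: Knu.
  exact: sig_decay.
- exists E, (fun x => x); split; first exact: KE; first exact: Kinf_id.
  move=> r r0 i; apply/andP; split; [exact: sig_ge_E | exact: sig_le_u].
- exact: Kinf_sig.
- exact: sig_bilip.
Qed.

End Hard3.

Unset Implicit Arguments. Set Strict Implicit. Set Printing Implicit Defensive.

Theorem theorem4p13 (R : realType) (I : finType) (i0 : I)
    (Ii : I -> {set I}) (gamma : I -> I -> R -> R)
    (mu : I -> (I -> R) -> \bar R) :
  is_gain_operator Ii gamma mu ->
  strongly_connected Ii ->
  (exists sigma : R -> I -> R, path_of_strict_decay Ii gamma mu sigma) <->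
  (exists rho : R -> R, Kinf rho /\ NJI (Gam_rho Ii gamma mu rho)).
Proof.
move=> HG HSC; split; first exact: a_to_b.
case=> rho [Krho HN].
have [xi [Kxi Hxi]] := Gam_edge HG.
case: (pselect (forall i, exists j, j \in Ii i)) => [HIn|HnIn].
- have HBex : forall m : nat, exists v, Dec Ii gamma mu rho v /\ forall i, m.+1%:R <= v i.
    by move=> m; apply: (Dec_above i0 HG HSC Krho HN Kxi Hxi); rewrite ltr0Sn.
  have /choice [B HBp] := HBex.
  have HB : forall m, Dec Ii gamma mu rho (B m) by move=> m; exact: (HBp m).1.
  have HBm : forall m i, m%:R <= B m i.
    by move=> m i; apply: le_trans _ ((HBp m).2 i); rewrite ler_nat.
  pose Xf := X Ii gamma mu rho B.
  apply: (path_exists i0 HG Krho Kxi Hxi HIn (X := Xf)).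
  + by move=> t t0; exact: (X_Dec i0 HG Krho HN HB HBm t0).
  + by move=> t t' i t0 tt; exact: (X_mono i0 HG Krho HN HB HBm i t0 tt).
  + by move=> t h i t0 h0; exact: (X_lip i0 HG Krho HN HB HBm i t0 h0).
  + by move=> t i t0; exact: (X_le_t i0 HG Krho HN HB HBm i t0).
  + exact: (X0 i0 HG Krho HN HB HBm).
  + move=> t i t0.
    have [c c0 Hc] := Dec_pos i0 HG HSC Krho Kxi Hxi i t0.
    apply: lt_le_trans c0 _; apply: (X_lb i0 HG Krho HN HB HBm (ltW t0)) => z Hz Hzt.
    exact: Hc.
  + move=> i M; have [t Ht] := Dec_unb i0 HG HSC Krho Kxi Hxi i M.
    pose t' := Num.max t 0.
    have t'0 : 0 <= t' by rewrite le_max lexx orbT.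
    exists t' => //; apply: (X_lb i0 HG Krho HN HB HBm t'0) => z Hz Hzt.
    apply: Ht Hz _; apply: le_trans Hzt; by rewrite le_max lexx.
- have [i1 Hi1] : exists i1, forall j, j \notin Ii i1.
    apply: contrapT => H; apply: HnIn => i; apply: contrapT => H2.
    apply: H; exists i => j; apply/negP => Hj; apply: H2; by exists j.
  have Hk : forall k, k = i1.
    move=> k; move: (HSC k i1) => /connectP [p Hp Hl].
    case/lastP: p Hp Hl => [|p' a] Hp Hl; first by rewrite Hl.
    rewrite rcons_path in Hp; case/andP: Hp => _ He.
    rewrite last_rcons in Hl; rewrite -Hl in He.
    by have := Hi1 (last k p'); rewrite He.
  have HG0 : forall s k, Gam Ii gamma mu s k = 0.
    move=> s k; rewrite -(Gam0 HG k) !GamE; congr (fine (mu k _)).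
    apply: funext => j; rewrite /gvec (Hk k); by rewrite (negbTE (Hi1 j)).
  exists (fun r _ => r); split.
  + exists (fun x => x); split; first exact: Kinf_id.
    move=> r r0 i; rewrite /Gam_rho HG0 addr0 //.
  + exists (fun x => x), (fun x => x); split; try exact: Kinf_id.
    by move=> r r0 i; rewrite lexx.
  + by move=> i; exact: Kinf_id.
  + move=> K _ _; exists 1, 1; split => // i r1 r2 t1 t2 _ _ _ _ <- <-.
    by rewrite !mul1r lexx.
Qed.
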